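(* Let $X$ be a Polish space, let $\Lambda$ be a Borel subset of $X$, and let $T_1,T_2$ be continuous self-maps of $X$. Assume that for every compact set $K\subseteq X$ with $K\cap\Lambda=\emptyset$ there exists an infinite set $I\subseteq\mathbb N$ such that no point $x\in X$ belongs to $T_1^{-n}(K)\cap T_2^{-n}(K)$ for infinitely many $n\in I$. Then, whenever $m_1$ is a $T_1$-invariant Borel probability measure on $X$ and $m_2$ is a $T_2$-invariant Borel probability measure on $X$ with $m_1(\Lambda)=0=m_2(\Lambda)$, the measures $m_1$ and $m_2$ are mutually singular.
   Context: A Borel probability measure $m$ is $T$-invariant if $m(T^{-1}(A))=m(A)$ for every Borel set $A$. *)

(* Defs.v *)
From HB Require Import structures.
From mathcomp Require Import all_boot all_order all_algebra.
From mathcomp Require Import all_classical all_reals all_analysis.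
Set Implicit Arguments. Unset Strict Implicit. Unset Printing Implicit Defensive.
Import Order.TTheory GRing.Theory Num.Theory.
Local Open Scope classical_set_scope.
Local Open Scope ring_scope.

(* We take the space together with a chosen compatible complete metric
   (a complete (pseudo)metric space whose topology is the metric one),
   and require it to be Hausdorff (so the pseudometric is a metric)
   and separable (it has a countable dense subset). *)
Definition polish_space (R : realType) (X : completePseudoMetricType R) : Prop :=
  hausdorff_space X /\ exists D : set X, countable D /\ dense D.

Definition borel (X : ptopologicalType) := g_sigma_algebraType (@open X).

Definition invariant_measure (R : realType) (X : ptopologicalType)
    (T : X -> X) (m : probability (borel X) R) : Prop :=
  forall A : set (borel X), measurable A -> m (T @^-1` A) = m A.

Definition mutually_singular (R : realType) (X : ptopologicalType)
    (m1 m2 : probability (borel X) R) : Prop :=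
  exists A : set (borel X), [/\ measurable A, m1 A = 0%E & m2 (~` A) = 0%E].

(* Main.v *)
Require Import Defs.
From HB Require Import structures.
From mathcomp Require Import all_boot all_order all_algebra.
From mathcomp Require Import all_classical all_reals all_analysis.
From mathcomp Require Import ring lra.
Import Order.TTheory GRing.Theory Num.Theory.
Local Open Scope classical_set_scope.
Local Open Scope ring_scope.

Section Tb.
Context {R : realType} {X : completePseudoMetricType R}.

Lemma ultra_finite_union (F : set_system X) (A : nat -> set X) N :
  UltraFilter F -> F [set y | exists2 k, (k < N)%N & A k y] ->
  exists2 k, (k < N)%N & F (A k).
Proof.
move=> uF; have PF : ProperFilter F := @ultra_proper _ F uF.
elim: N => [|N IH] H.
  by exfalso; apply: (filter_not_empty F); apply: filterS H => y [].
case: (in_ultra_setVsetC (A N) uF) => FA; first by exists N.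
have : F [set y | exists2 k, (k < N)%N & A k y].
  apply: filterS (filterI H FA) => y [[k]].
  rewrite ltnS leq_eqVlt => /orP[/eqP -> //|kN Aky _]; by exists k.
by move/IH => [k kN Fk]; exists k => //; exact: ltnW.
Qed.

Lemma tb_compact (K : set X) : closed K ->
  (forall e : R, 0 < e -> exists N (c : nat -> X),
     K `<=` [set y | exists2 k, (k < N)%N & ball (c k) e y]) -> compact K.
Proof.
move=> cK tb; rewrite compact_ultra => F uF FK.
have PF : ProperFilter F := @ultra_proper _ F uF.
have cF : cauchy F.
  apply/cauchy_ballP => e e0.
  have [N [c Kc]] := tb (e/2) (divr_gt0 e0 (ltr0Sn _ 1)).
  have [k _ Fk] := @ultra_finite_union F _ _ uF (filterS Kc FK).
  exists (ball (c k) (e/2), ball (c k) (e/2)) => //= -[x y] /= [bx b_y].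
  by rewrite [e]splitr; exact: ball_triangle (ball_sym bx) b_y.
have Fl := @cauchy_cvg _ F PF cF.
exists (lim F); split => //.
exact: (@closed_cvg _ _ F PF id K cK FK (lim F) Fl).
Qed.

Lemma ev_ex (P : nat -> Prop) : (\forall n \near \oo, P n) -> exists n, P n.
Proof. by move=> [N _ HN]; exists N; apply: HN => /=. Qed.

Lemma cvg0_ev (u : nat -> \bar R) (e : R) : 0 < e -> u @ \oo --> 0%E ->
  exists n, (u n < e%:E)%E.
Proof.
move=> e0 H; apply: ev_ex; exact: (H _ (@nbhs_open_ereal_lt R 0 (fun=> e) e0)).
Qed.

Local Notation BX := (borel X).

Lemma open_mb (A : set X) : open A -> measurable (A : set BX).
Proof. by move=> oA; exact: sub_sigma_algebra. Qed.

Lemma closed_mb (A : set X) : closed A -> measurable (A : set BX).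
Proof.
move=> cA; rewrite -(setCK A); apply: measurableC; apply: open_mb.
exact: closed_openC.
Qed.

Lemma tight (P : probability BX R) (D : set X) : countable D -> dense D ->
  forall e : R, 0 < e -> exists K : set X, compact K /\ (P (~` K) <= e%:E)%E.
Proof.
move=> cD dD e e0.
have [x0 _] : exists x : X, True.
  apply: contrapT => nx.
  have T0 : [set: X] = set0 by apply/seteqP; split=> x // _; apply nx; exists x.
  have := probability_setT P; rewrite /= T0 measure0 => -[] /eqP.
  by rewrite eq_sym oner_eq0.
have [f Df] : exists f : nat -> X, D = f @` setT.
  case/pfcard_geP: cD => [D0|/surjfunPex//]; exfalso.
  have [z [_ Dz]] := dD setT (ex_intro _ x0 I) openT.
  by rewrite D0 in Dz.
have hd x (r : R) : 0 < r -> exists k, ball (f k) r x.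
  move=> r0; have [z [zi Dz]] := dD (ball x r)° (ex_intro _ x (nbhsx_ballx x r r0))
    (open_interior _).
  rewrite Df in Dz; case: Dz => k _ fkz; exists k; rewrite fkz.
  by apply: ball_sym; exact: interior_subset.
have hd' x (r : R) : 0 < r -> exists k, (ball (f k) r)° x.
  move=> r0; have [k bk] := hd x (r/2) (divr_gt0 r0 (ltr0Sn _ 1)); exists k.
  rewrite /interior/=; apply: filterS (nbhsx_ballx x (r/2) (divr_gt0 r0 (ltr0Sn _ 1))).
  by move=> y bxy; rewrite [r]splitr; exact: ball_triangle bk bxy.
pose rr (j : nat) : R := (j.+1%:R)^-1.
have rr0 j : 0 < rr j by rewrite invr_gt0 ltr0Sn.
pose W j N := \bigcup_(k in [set k | (k < N)%N]) (ball (f k) (rr j))°.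
have oW j N : open (W j N) by apply: bigcup_open => k _; exact: open_interior.
have hN j : exists N, (P (~` W j N) <= (e / (2 ^ j.+1)%:R)%:E)%E.
  have := @nonincreasing_cvg_mu _ _ _ P (fun N => ~` W j N).
  have -> : \bigcap_N ~` W j N = set0.
    apply/seteqP; split=> // x Wx; have [k kx] := hd' x (rr j) (rr0 j).
    by apply: (Wx k.+1 I); exists k => //=.
  rewrite measure0 => H.
  have H' : (P \o (fun N => ~` W j N)) x @[x --> \oo] --> 0%E.
    apply: H.
    - by apply: (le_lt_trans (probability_le1 _ _)) => //; [apply: closed_mb; exact: open_closedC | exact: ltey].
    - by move=> N; apply: closed_mb; exact: open_closedC.
    - by apply: measurable0.
    - move=> n m nm; rewrite subsetEset; apply: subsetC => y [k /= kn ky].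
      by exists k => //=; exact: leq_trans kn nm.
  have ej : 0 < e / (2 ^ j.+1)%:R by apply: divr_gt0 => //; rewrite ltr0n expn_gt0.
  have [N HN] := cvg0_ev _ _ ej H'.
  by exists N; exact: ltW.
have /choice [N HN] := hN.
pose S := \bigcap_j W j (N j).
exists (closure S); split.
  apply: tb_compact; first exact: closed_closure.
  move=> eps eps0.
  have [j Hj] := ev_ex _ (near_infty_natSinv_lt (PosNum (divr_gt0 eps0 (ltr0Sn _ 1)))).
  exists (N j), f => y Sy.
  have [z [Sz bz]] := Sy _ (nbhsx_ballx y (rr j) (rr0 j)).
  have [k /= kN kz] := Sz j I.
  exists k => //; apply: (@le_ball _ _ _ (rr j + rr j)).
    by rewrite [eps]splitr lerD // ltW.
  exact: ball_triangle (interior_subset kz) (ball_sym bz).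
apply: (@le_trans _ _ (\sum_(0 <= j <oo) P (~` W j (N j)))%E).
  apply: measure_sigma_subadditive.
  - by move=> j; apply: closed_mb; exact: open_closedC.
  - by apply: open_mb; apply: closed_openC; exact: closed_closure.
  - move=> y Sy; apply: contrapT => nW; apply: Sy; apply: subset_closure => j _.
    by apply: contrapT => Wj; apply: nW; exists j.
apply: (@le_trans _ _ (\sum_(0 <= j <oo) (e / (2 ^ j.+1)%:R)%:E)%E).
  by apply: lee_nneseries => // j _; exact: HN.
exact: (epsilon_trick0 xpredT (ltW e0)).
Qed.


Section Reg.
Variable P : probability BX R.

Lemma sum_bound (G : nat -> set X) (e : R) : 0 <= e ->
  (forall k, measurable (G k : set BX)) ->
  (forall k, (P (G k) <= (e / (2 ^ k.+1)%:R)%:E)%E) ->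
  forall A : set X, measurable (A : set BX) -> A `<=` \bigcup_k G k -> (P A <= e%:E)%E.
Proof.
move=> e0 mG PG A mA AG.
apply: (@le_trans _ _ (\sum_(0 <= k <oo) P (G k))%E).
  exact: measure_sigma_subadditive.
apply: (@le_trans _ _ (\sum_(0 <= j <oo) (e / (2 ^ j.+1)%:R)%:E)%E).
  by apply: lee_nneseries => // j _; exact: PG.
exact: (epsilon_trick0 xpredT e0).
Qed.

Definition approx (A : set X) := forall e : R, 0 < e ->
  (exists F, [/\ closed F, F `<=` A & (P (A `\` F) <= e%:E)%E]) /\
  (exists F, [/\ closed F, F `<=` ~` A & (P (~` A `\` F) <= e%:E)%E]).

Lemma approx_open (U : set X) : open U -> approx U.
Proof.
move=> oU e e0; split; last first.
  exists (~` U); split => //; first exact: open_closedC.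
  by rewrite setDv measure0 lee_fin ltW.
pose rr (j : nat) : R := (j.+1%:R)^-1.
have rr0 j : 0 < rr j by rewrite invr_gt0 ltr0Sn.
pose S n := [set x | ball x (rr n) `<=` U].
pose F n := closure (S n).
have FU n : F n `<=` U.
  move=> y Fy; have [s [Ss bs]] := Fy _ (nbhsx_ballx y (rr n) (rr0 n)).
  exact/Ss/ball_sym.
have cF n : closed (F n) by exact: closed_closure.
have H := @nonincreasing_cvg_mu _ _ _ P (fun n => U `\` F n).
have E0 : \bigcap_n (U `\` F n) = set0.
  apply/seteqP; split=> // x Hx.
  have [Ux _] := Hx 0%N I.
  have /nbhs_ballP[r r0 rU] : nbhs x U by move: oU; rewrite openE => /(_ x Ux).
  have [n Hn] := ev_ex _ (near_infty_natSinv_lt (PosNum r0)).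
  have [_] := Hx n I; apply; apply: subset_closure => y bxy.
  by apply: rU; apply: le_ball bxy; exact: ltW.
rewrite E0 measure0 in H.
have H' : (P \o (fun n => U `\` F n)) x @[x --> \oo] --> 0%E.
  apply: H.
  - apply: (le_lt_trans (probability_le1 _ _)) => //; last exact: ltey.
    by apply: measurableD; [exact: open_mb | exact: closed_mb].
  - by move=> n; apply: measurableD; [exact: open_mb | exact: closed_mb].
  - by apply: measurable0.
  - move=> n m nm; rewrite subsetEset; apply: setDS; apply: closure_subset.
    move=> x Sx y bxy; apply: Sx; apply: le_ball bxy.
    by rewrite lef_pV2 ?posrE ?ltr0Sn // ler_nat ltnS.
have [n Hn] := cvg0_ev _ _ e0 H'.
by exists (F n); split => //; exact: ltW.
Qed.

Lemma approx_sigma : sigma_algebra setT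
  [set A : set X | measurable (A : set BX) /\ approx A].
Proof.
split.
- split; first exact: measurable0.
  move=> e e0; split.
    by exists set0; split => //; [exact: closed0 | rewrite setD0 measure0 lee_fin ltW].
  exists setT; split; [exact: closedT | by move=> x _ [] | ].
  by rewrite setC0 setDv measure0 lee_fin ltW.
- move=> A [mA aA]; rewrite setTD; split; first exact: measurableC.
  move=> e e0; have [h1 h2] := aA e e0; split => //.
  by rewrite setCK.
- move=> A HA; have mA k := (HA k).1; have aA k := (HA k).2.
  split; first exact: bigcupT_measurable.
  move=> e e0; have e20 : 0 < e / 2 by exact: divr_gt0.
  have ek k : 0 < e / 2 / (2 ^ k.+1)%:R by apply: divr_gt0 => //; rewrite ltr0n expn_gt0.
  have ek' k : 0 < e / (2 ^ k.+1)%:R by apply: divr_gt0 => //; rewrite ltr0n expn_gt0.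
  split.
  + pose B N := \bigcup_(k in `I_N) A k.
    have mB N : measurable (B N : set BX).
      by apply: bigcup_measurable => k _; exact: mA.
    have H := @nonincreasing_cvg_mu _ _ _ P (fun N => (\bigcup_k A k) `\` B N).
    have E0 : \bigcap_N ((\bigcup_k A k) `\` B N) = set0.
      apply/seteqP; split=> // x Hx.
      have [[k _ Akx] _] := Hx 0%N I.
      by have [_] := Hx k.+1 I; apply; exists k => //=.
    rewrite E0 measure0 in H.
    have H' : (P \o (fun N => (\bigcup_k A k) `\` B N)) x @[x --> \oo] --> 0%E.
      apply: H.
      - apply: (le_lt_trans (probability_le1 _ _)) => //; last exact: ltey.
        by apply: measurableD => //; exact: bigcupT_measurable.
      - by move=> n; apply: measurableD => //; exact: bigcupT_measurable.
      - by apply: measurable0.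
      - move=> n m nm; rewrite subsetEset; apply: setDS => y [k /= kn ky].
        by exists k => //=; exact: leq_trans kn nm.
    have [N HN] := cvg0_ev _ _ e20 H'.
    have /choice [F HF] : forall k, exists F, [/\ closed F, F `<=` A k &
        (P (A k `\` F) <= (e / 2 / (2 ^ k.+1)%:R)%:E)%E].
      by move=> k; have [] := aA k _ (ek k).
    exists (\bigcup_(k in `I_N) F k); split.
    * by apply: closed_bigcup => // k _; have [] := HF k.
    * by move=> x [k _ Fx]; exists k => //; have [_ + _] := HF k; apply.
    apply: (@le_trans _ _ (P (((\bigcup_k A k) `\` B N) `|` \bigcup_k (A k `\` F k)))).
      apply: le_measure; rewrite ?inE.
      - apply: measurableD; first exact: bigcupT_measurable.
        by apply: closed_mb; apply: closed_bigcup => // k _; have [] := HF k.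
      - apply: measurableU; first by apply: measurableD => //; exact: bigcupT_measurable.
        apply: bigcupT_measurable => k; apply: measurableD => //.
        by apply: closed_mb; have [] := HF k.
      - move=> x [[k _ Akx] nF].
        have [[j /= jN Ajx]|nB] := pselect (B N x); last by left; split => //; exists k.
        by right; exists j => //; split => // Fjx; apply: nF; exists j.
    apply: (le_trans (measureU2 _ _ _)).
    - by apply: measurableD => //; exact: bigcupT_measurable.
    - apply: bigcupT_measurable => k; apply: measurableD => //.
      by apply: closed_mb; have [] := HF k.
    rewrite [e]splitr EFinD; apply: leeD; first exact: ltW.
    apply: (@sum_bound (fun k => A k `\` F k) (e/2) (ltW e20)).
    - move=> k; apply: measurableD => //.
      by apply: closed_mb; have [] := HF k.
    - by move=> k; have [] := HF k.
    - apply: bigcupT_measurable => k; apply: measurableD => //.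
      by apply: closed_mb; have [] := HF k.
    - by [].
  + have /choice [F HF] : forall k, exists F, [/\ closed F, F `<=` ~` A k &
        (P (~` A k `\` F) <= (e / (2 ^ k.+1)%:R)%:E)%E].
      by move=> k; have [_] := aA k _ (ek' k).
    exists (\bigcap_k F k); split.
    * by apply: closed_bigI => k _; have [] := HF k.
    * move=> x Fx [k _ Akx]; have [_ + _] := HF k.
      by move/(_ x (Fx k I)); apply.
    * apply: (@sum_bound (fun k => ~` A k `\` F k) e (ltW e0)).
      - move=> k; apply: measurableD; first exact: measurableC.
        by apply: closed_mb; have [] := HF k.
      - by move=> k; have [] := HF k.
      - apply: measurableD; first exact/measurableC/bigcupT_measurable.
        by apply: closed_mb; apply: closed_bigI => k _; have [] := HF k.
      - move=> x [nA nF].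
        have [k _ nFk] : exists2 k, True & ~ F k x.
          apply: contrapT => h; apply: nF => k _; apply: contrapT => ?.
          by apply: h; exists k.
        by exists k => //; split => // Akx; apply: nA; exists k.
Qed.

Lemma approx_all (A : set X) : measurable (A : set BX) -> approx A.
Proof.
move=> mA; have := @smallest_sub _ (sigma_algebra setT) open
  [set A : set X | measurable (A : set BX) /\ approx A] approx_sigma.
move=> /(_ _ A mA) []//.
by move=> U oU; split; [exact: open_mb | exact: approx_open].
Qed.

End Reg.


Lemma one_compact (m : probability BX R) (L : set X) (D : set X) :
  hausdorff_space X -> countable D -> dense D -> measurable (L : set BX) -> m L = 0%E ->
  forall e : R, 0 < e -> exists K, [/\ compact K, K `&` L = set0 & (m (~` K) <= e%:E)%E].
Proof.
move=> hX cD dD mL mL0 e e0.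
have e20 : 0 < e / 2 by exact: divr_gt0.
have [K0 [cK0 mK0]] := tight m D cD dD (e/2) e20.
have [[F [cF FL mF]] _] := approx_all m (~` L) (measurableC mL) (e/2) e20.
have clK0 : closed K0 by exact: compact_closed.
exists (K0 `&` F); split.
- exact: compact_closedI.
- by apply/seteqP; split=> // x [[_ Fx] Lx]; exact: (FL x Fx).
apply: (@le_trans _ _ (m (~` K0 `|` (L `|` (~` L `\` F))))).
  apply: le_measure; rewrite ?inE.
  - by apply: open_mb; apply: closed_openC; exact: closedI.
  - apply: measurableU; first by apply: open_mb; exact: closed_openC.
    by apply: measurableU => //; apply: measurableD; [exact: measurableC | exact: closed_mb].
  - move=> x /not_andP [nK|nF]; first by left.
    by right; have [Lx|nL] := pselect (L x); [left | right].
apply: (le_trans (measureU2 _ _ _)).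
- by apply: open_mb; exact: closed_openC.
- by apply: measurableU => //; apply: measurableD; [exact: measurableC | exact: closed_mb].
rewrite [e]splitr EFinD; apply: leeD => //.
apply: (le_trans (measureU2 _ _ _)) => //.
  by apply: measurableD; [exact: measurableC | exact: closed_mb].
apply: (@le_trans _ _ (0 + (e/2)%:E)%E); last by rewrite add0e.
apply: leeD => //; rewrite le_eqVlt; apply/orP; left; apply/eqP; exact: mL0.
Qed.


Lemma finite_nat_bound (S : set nat) : finite_set S -> exists M, forall n, S n -> (n < M)%N.
Proof.
move=> /finite_fsetP [F ->]; exists (\max_(i <- finmap.enum_fset F) i).+1 => n /= nF.
by rewrite ltnS; exact: (@leq_bigmax_seq _ (finmap.enum_fset F) xpredT id n nF isT).
Qed.

Lemma iter_cont (T : X -> X) : continuous T -> forall n, continuous (iter n T).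
Proof.
move=> cT; elim=> [|n IH] x /=; first exact: cvg_id.
exact: (continuous_comp (IH x) (cT _)).
Qed.

Lemma inv_iter (T : X -> X) (m : probability BX R) : continuous T ->
  invariant_measure T m -> forall n (A : set X), open A -> m ((iter n T) @^-1` A) = m A.
Proof.
move=> cT inv; elim=> [|n IH] A oA //=.
have oA' : open (T @^-1` A) by apply: open_comp => // x _; exact: cT.
have := IH _ oA' => /= ->; exact: (inv A (open_mb A oA)).
Qed.

End Tb.

Theorem theorem3p2 (R : realType) (X : completePseudoMetricType R)
  (Lambda : set X) (T1 T2 : X -> X) :
  polish_space X ->
  measurable (Lambda : set (borel X)) ->
  continuous T1 -> continuous T2 ->
  (forall K : set X, compact K -> K `&` Lambda = set0 ->
     exists I : set nat, infinite_set I /\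
       forall x : X,
         finite_set [set n | I n /\ K (iter n T1 x) /\ K (iter n T2 x)]) ->
  forall (m1 m2 : probability (borel X) R),
    invariant_measure T1 m1 -> invariant_measure T2 m2 ->
    m1 Lambda = 0%E -> m2 Lambda = 0%E ->
    mutually_singular m1 m2.
Proof.
move=> [hX [D [cD dD]]] mL cT1 cT2 Hyp m1 m2 inv1 inv2 m1L m2L.
pose nu := cadd (charge_of_finite_measure m1) (copp (charge_of_finite_measure m2)).
have [Pp [Nn [[mP posP] [mN negN] PN PN0]]] := Hahn_decomposition nu.
have fin1 (A : set (borel X)) : measurable A -> m1 A \is a fin_num by move=> mA; exact: fin_num_measure.
have fin2 (A : set (borel X)) : measurable A -> m2 A \is a fin_num by move=> mA; exact: fin_num_measure.
have leP A : measurable A -> A `<=` Pp -> (m2 A <= m1 A)%E.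
  move=> mA AP; have := posP A mA AP; rewrite /nu /cadd /copp /=.
  by rewrite sube_ge0 // fin2.
have leN A : measurable A -> A `<=` Nn -> (m1 A <= m2 A)%E.
  move=> mA AN; have := negN A mA AN; rewrite /nu /cadd /copp /=.
  by rewrite sube_le0 // fin2.
pose nuM := measure_add (mrestr m2 mP) (mrestr m1 mN).
have nuE A : nuM A = (m2 (A `&` Pp) + m1 (A `&` Nn))%E by rewrite /nuM measure_addE.
have CN : ~` Nn = Pp.
  apply/seteqP; split=> x.
    move=> nN; have : (Pp `|` Nn) x by rewrite PN.
    by case => // /nN.
  by move=> Px Nx; have : (Pp `&` Nn) x by []; rewrite PN0.
have disj B : (B `&` Pp) `&` (B `&` Nn) = set0.
  by apply/seteqP; split=> x // [[_ Px] [_ Nx]]; rewrite -PN0.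
have splitB (m : probability (borel X) R) B : measurable B ->
    m B = (m (B `&` Pp) + m (B `&` Nn))%E.
  move=> mB; rewrite -measureU //; try exact: measurableI.
  by rewrite -setIUr PN setIT.
have nu_le1 B : measurable B -> (nuM B <= m1 B)%E.
  move=> mB; rewrite nuE (splitB m1 B mB); apply: leeD => //.
  by apply: leP; [exact: measurableI | exact: subIsetr].
have nu_le2 B : measurable B -> (nuM B <= m2 B)%E.
  move=> mB; rewrite nuE (splitB m2 B mB); apply: leeD => //.
  by apply: leN; [exact: measurableI | exact: subIsetr].
have [c0|cpos] := eqVneq (nuM setT) 0%E.
  move: c0; rewrite nuE !setTI => /eqP; rewrite padde_eq0 // => /andP[/eqP m2P /eqP m1N].
  by exists Nn; split => //; rewrite CN.
exfalso.
have nufin B : measurable B -> nuM B = (fine (nuM B))%:E.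
  move=> mB; rewrite fineK // ge0_fin_numE ?measure_ge0 //.
  apply: (le_lt_trans (nu_le1 _ mB)); apply: (le_lt_trans (probability_le1 _ mB)).
  exact: ltry.
pose cr := fine (nuM setT).
have cE : nuM setT = cr%:E by exact: nufin.
have cr0 : 0 < cr by rewrite -lte_fin -cE lt0e cpos measure_ge0.
have e0 : 0 < cr / 4 by exact: divr_gt0.
have [K1 [cK1 K1L mK1]] := one_compact m1 Lambda D hX cD dD mL m1L (cr/4) e0.
have [K2 [cK2 K2L mK2]] := one_compact m2 Lambda D hX cD dD mL m2L (cr/4) e0.
pose K := K1 `|` K2.
have cK : compact K by exact: compactU.
have KL : K `&` Lambda = set0 by rewrite /K setIUl K1L K2L setU0.
have clK : closed K by exact: compact_closed.
have oCK : open (~` K) by exact: closed_openC.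
have mK1' : (m1 (~` K) <= (cr/4)%:E)%E.
  apply: le_trans mK1; apply: le_measure; rewrite ?inE.
  - exact: open_mb.
  - by apply: open_mb; apply: closed_openC; exact: compact_closed.
  - by move=> x nK K1x; apply: nK; left.
have mK2' : (m2 (~` K) <= (cr/4)%:E)%E.
  apply: le_trans mK2; apply: le_measure; rewrite ?inE.
  - exact: open_mb.
  - by apply: open_mb; apply: closed_openC; exact: compact_closed.
  - by move=> x nK K2x; apply: nK; right.
have [I [infI finI]] := Hyp K cK KL.
pose An n := (iter n T1) @^-1` K `&` (iter n T2) @^-1` K.
have clA n : closed (An n).
  apply: closedI; apply: preimage_closed => //.
  - by move=> x _; exact: iter_cont.
  - by move=> x _; exact: iter_cont.
have mA n : measurable (An n : set (borel X)) by exact: closed_mb.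
have oC1 n : open ((iter n T1) @^-1` (~` K)).
  by apply: open_comp => // x _; exact: iter_cont.
have oC2 n : open ((iter n T2) @^-1` (~` K)).
  by apply: open_comp => // x _; exact: iter_cont.
have hAc n : (nuM (~` An n) <= (cr/2)%:E)%E.
  rewrite /An setCI.
  apply: (le_trans (measureU2 _ _ _)); [exact: (open_mb _ (oC1 n)) | exact: (open_mb _ (oC2 n)) |].
  rewrite (_ : cr / 2 = cr / 4 + cr / 4); last by field.
  rewrite EFinD; apply: leeD.
  - apply: (le_trans (nu_le1 _ (open_mb _ (oC1 n)))).
    by rewrite (inv_iter _ _ cT1 inv1 n _ oCK).
  - apply: (le_trans (nu_le2 _ (open_mb _ (oC2 n)))).
    by rewrite (inv_iter _ _ cT2 inv2 n _ oCK).
have hA n : ((cr/2)%:E <= nuM (An n))%E.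
  have H : (nuM setT <= nuM (An n) + nuM (~` An n))%E.
    rewrite -(setUv (An n)); apply: measureU2 => //; exact: measurableC.
  have := hAc n; move: H.
  rewrite cE (nufin _ (mA n)) (nufin _ (measurableC (mA n))) -EFinD !lee_fin.
  by move=> h1 h2; lra.
pose B M := \bigcup_(n in [set n | I n /\ (M <= n)%N]) An n.
have mB M : measurable (B M : set (borel X)).
  by apply: bigcup_measurable => n _; exact: mA.
have hB M : ((cr/2)%:E <= nuM (B M))%E.
  have [n [In Mn]] : exists n, I n /\ (M <= n)%N.
    apply: contrapT => h; apply: infI.
    apply: (sub_finite_set _ (finite_II M)) => n In /=.
    by rewrite ltnNge; apply/negP => Mn; apply: h; exists n.
  apply: (le_trans (hA n)); apply: le_measure; rewrite ?inE //.
  by move=> x Ax; exists n.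
have E0 : \bigcap_M B M = set0.
  apply/seteqP; split=> // x Bx.
  have [M HM] := finite_nat_bound _ (finI x).
  have [n [In Mn] [A1 A2]] := Bx M Logic.I.
  by have := HM n (conj In (conj A1 A2)); rewrite ltnNge Mn.
have H := @nonincreasing_cvg_mu _ _ _ nuM B.
rewrite E0 measure0 in H.
have H' : (nuM \o B) x @[x --> \oo] --> 0%E.
  apply: H => //.
  - apply: (le_lt_trans (nu_le1 _ (mB 0%N))).
    by apply: (le_lt_trans (probability_le1 _ (mB 0%N))); exact: ltry.
  - move=> n m nm; rewrite subsetEset => x [k [Ik mk] Ak].
    by exists k => //; split => //; exact: leq_trans nm mk.
have cr20 : 0 < cr / 2 by exact: divr_gt0.
have [M HM] := cvg0_ev _ _ cr20 H'.
by have := lt_le_trans HM (hB M); rewrite ltxx.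
Qed.
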